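(* Let $X$ be a finite cycle set and $x\in X$. The following are equivalent: (1) $X=\langle x\rangle$; (2) there is a finite brace $B$ such that $X\subseteq B$ (with the cycle set structure of $X$ being the one induced from $B$), $X=\{\lambda_b(x) : b\in B\}$, and $B=B(x)$.
   Context: A cycle set is a non-empty set $X$ with one operation $\cdot$ such that each $\sigma_x:y\mapsto x\cdot y$ is bijective and $(x\cdot y)\cdot(x\cdot z)=(y\cdot x)\cdot(y\cdot z)$ for all $x,y,z$. A sub-cycle set is a subset that is again a cycle set under the restricted operation; $\langle x\rangle$ is the smallest sub-cycle set containing $x$. A brace is a triple $(B,+,\circ)$ with $(B,+)$ an abelian group, $(B,\circ)$ a group, and $a\circ(b+c)=a\circ b-a+a\circ c$; $\lambda_a(b):=-a+a\circ b$, $a^-$ is the inverse of $a$ in $(B,\circ)$, and $B$ is a cycle set via $a\cdot b:=\lambda_{a^-}(b)$. $B(x)$ is the smallest subset of $B$ containing $x$ that is a subgroup of both $(B,+)$ and $(B,\circ)$. *)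

(* Defs.v *)
From HB Require Import structures.
From mathcomp Require Import all_boot.
Set Implicit Arguments. Unset Strict Implicit. Unset Printing Implicit Defensive.

Definition is_cycle_set (X : Type) (op : X -> X -> X) : Prop :=
  (forall x, bijective (op x)) /\
  (forall x y z, op (op x y) (op x z) = op (op y x) (op y z)).

(* S is a sub-cycle set: non-empty, closed under op, and each restricted
   sigma_x (x in S) is a bijection S -> S.  (The cycle-set identity is
   inherited from X.) *)
Definition sub_cycle_set (X : finType) (op : X -> X -> X) (S : {set X}) : bool :=
  [&& S != set0,
      [forall x in S, forall y in S, op x y \in S],
      [forall x in S, forall y in S, forall z in S, (op x y == op x z) ==> (y == z)] &
      [forall x in S, forall y in S, exists z in S, op x z == y]].

Definition cs_gen (X : finType) (op : X -> X -> X) (x : X) : {set X} :=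
  \bigcap_(S : {set X} | sub_cycle_set op S && (x \in S)) S.

Record brace := Brace {
  bT :> finType;
  badd : bT -> bT -> bT;
  bopp : bT -> bT;
  bzero : bT;
  bcirc : bT -> bT -> bT;
  binv : bT -> bT;
  bone : bT;
  baddA : forall a b c, badd a (badd b c) = badd (badd a b) c;
  baddC : forall a b, badd a b = badd b a;
  badd0 : forall a, badd bzero a = a;
  baddN : forall a, badd (bopp a) a = bzero;
  bcircA : forall a b c, bcirc a (bcirc b c) = bcirc (bcirc a b) c;
  bcirc1 : forall a, bcirc bone a = a;
  bcircV : forall a, bcirc (binv a) a = bone;
  bdistr : forall a b c,
    bcirc a (badd b c) = badd (badd (bcirc a b) (bopp a)) (bcirc a c)
}.

Definition blambda (B : brace) (a b : B) : B := badd (bopp a) (bcirc a b).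

Definition bcs_op (B : brace) (a b : B) : B := blambda (binv a) b.

Definition bi_subgroup (B : brace) (S : {set B}) : bool :=
  [&& bzero B \in S, [forall a in S, forall b in S, badd a b \in S],
      [forall a in S, bopp a \in S],
      bone B \in S, [forall a in S, forall b in S, bcirc a b \in S] &
      [forall a in S, binv a \in S]].

Definition brace_gen (B : brace) (x : B) : {set B} :=
  \bigcap_(S : {set B} | bi_subgroup S && (x \in S)) S.

(* Main.v *)
Require Import Defs.
From HB Require Import structures.
From mathcomp Require Import all_boot fingroup perm ssralg zmodp zify.
Set Implicit Arguments. Unset Strict Implicit. Unset Printing Implicit Defensive.

Section BraceTheory.
Variable B : brace.
Implicit Types a b c : B.
Local Notation "a +' b" := (badd a b) (at level 50, left associativity).
Local Notation "-' a" := (bopp a) (at level 35).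
Local Notation "a *' b" := (bcirc a b) (at level 40, left associativity).
Local Notation "0'" := (bzero B).
Local Notation lam := (@blambda B).

Lemma badd0r a : a +' 0' = a.
Proof. by rewrite baddC badd0. Qed.
Lemma baddNr a : a +' -' a = 0'.
Proof. by rewrite baddC baddN. Qed.
Lemma baddKl a b : -' a +' (a +' b) = b.
Proof. by rewrite baddA baddN badd0. Qed.
Lemma baddKr a b : a +' (-' a +' b) = b.
Proof. by rewrite baddA baddNr badd0. Qed.
Lemma badd_inj a b c : a +' b = a +' c -> b = c.
Proof. by move=> h; rewrite -(baddKl a b) h baddKl. Qed.
Lemma baddCA a b c : a +' (b +' c) = b +' (a +' c).
Proof. by rewrite !baddA (baddC a). Qed.
Lemma bopp0 : -' 0' = 0'.
Proof. by have := baddN 0'; rewrite badd0r. Qed.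
Lemma boppK a : -' (-' a) = a.
Proof. by apply: (@badd_inj (-' a)); rewrite baddN baddNr. Qed.
Lemma bopp_add a b : -' (a +' b) = -' a +' -' b.
Proof.
apply: (@badd_inj (a +' b)); rewrite baddNr.
by rewrite baddA -(baddA a b) (baddC b) baddA baddNr badd0 baddNr.
Qed.

Lemma bcircx0 a : a *' 0' = a.
Proof.
have h := bdistr a 0' 0'; rewrite badd0 in h.
have h2 : a *' 0' +' 0' = a *' 0' +' (-' a +' a *' 0') by rewrite badd0r {1}h baddA.
have := badd_inj h2 => /(congr1 (badd a)); rewrite badd0r baddKr => h'; exact: esym h'.
Qed.

Lemma bone0 : bone B = 0'.
Proof. by rewrite -[LHS](bcircx0 (bone B)) bcirc1. Qed.

Lemma bcirc1r a : a *' bone B = a.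
Proof. by rewrite bone0 bcircx0. Qed.

Lemma bcirc_inj a b c : a *' b = a *' c -> b = c.
Proof. by move=> h; rewrite -(bcirc1 b) -(bcircV a) -bcircA h bcircA bcircV bcirc1. Qed.

Lemma bcircVr a : a *' binv a = bone B.
Proof.
apply: (@bcirc_inj (binv a)); by rewrite bcircA bcircV bcirc1 bcirc1r.
Qed.

Lemma circE a b : a *' b = a +' lam a b.
Proof. by rewrite /blambda baddKr. Qed.

Lemma lamD a b c : lam a (b +' c) = lam a b +' lam a c.
Proof.
rewrite /blambda bdistr.
by rewrite -!baddA; congr (_ +' _); rewrite baddA.
Qed.

Lemma lam0 a : lam a 0' = 0'.
Proof. by rewrite /blambda bcircx0 baddN. Qed.

Lemma lamN a b : lam a (-' b) = -' lam a b.
Proof.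
apply: (@badd_inj (lam a b)); by rewrite -lamD !baddNr lam0.
Qed.

Lemma lamM a b c : lam (a *' b) c = lam a (lam b c).
Proof.
have -> : lam b c = -' b +' b *' c by [].
rewrite lamD lamN /blambda bopp_add boppK bcircA.
by rewrite -baddA baddCA baddKr.
Qed.

Lemma lam1 c : lam (bone B) c = c.
Proof. by rewrite /blambda bcirc1 bone0 bopp0 badd0. Qed.

Lemma lamK a c : lam a (lam (binv a) c) = c.
Proof. by rewrite -lamM bcircVr lam1. Qed.
Lemma lamVK a c : lam (binv a) (lam a c) = c.
Proof. by rewrite -lamM bcircV lam1. Qed.

Lemma lam_inj a : injective (lam a).
Proof. by move=> b c h; rewrite -(lamVK a b) h lamVK. Qed.

End BraceTheory.

Lemma fill_lemma (T : finType) (C : {set T}) (g : T -> T) :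
  injective g -> (forall t, t \in C -> g t \in C) ->
  forall u, u \in C -> exists2 t, t \in C & g t = u.
Proof.
move=> ginj gC u uC.
have e : g @: C = C.
  apply/eqP; rewrite eqEcard (card_imset _ ginj) leqnn andbT.
  by apply/subsetP=> _ /imsetP[t tC ->]; apply: gC.
by move: uC; rewrite -{1}e => /imsetP[t tC ->]; exists t.
Qed.

Section Dir21.
Variables (X : finType) (op : X -> X -> X) (x : X) (B : brace) (f : X -> B).
Hypothesis finj : injective f.
Hypothesis fhom : forall y z, f (op y z) = bcs_op (f y) (f z).
Hypothesis forb : f @: [set: X] = [set blambda b (f x) | b in [set: B]].
Hypothesis fgen : brace_gen (f x) = [set: B].
Variable S : {set X}.
Hypothesis subS : sub_cycle_set op S.
Hypothesis xS : x \in S.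

Local Notation Y := (f @: S).
Local Notation lam := (@blambda B).

Lemma Y_lamV y w : y \in Y -> w \in Y -> lam (binv y) w \in Y.
Proof.
case/and4P: subS => _ /forallP cl _ _.
move=> /imsetP[s sS ->] /imsetP[t tS ->].
have := forallP (implyP (cl s) sS) t; rewrite tS /= => h.
by rewrite -[lam _ _]/(bcs_op (f s) (f t)) -fhom; apply: imset_f.
Qed.

Lemma Y_lam y w : y \in Y -> w \in Y -> lam y w \in Y.
Proof.
case/and4P: subS => _ _ _ /forallP su.
move=> /imsetP[s sS ->] /imsetP[t tS ->].
have := forallP (implyP (su s) sS) t; rewrite tS /= => /existsP[z /andP[zS /eqP e]].
have -> : f t = lam (binv (f s)) (f z) by rewrite -e fhom.
by rewrite lamK; apply: imset_f.
Qed.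

Definition Cset : {set B} :=
  \bigcap_(T : {set B} | (bzero B \in T) && [forall t in T, forall y in Y, badd t y \in T]) T.

Lemma C_ind (T : {set B}) : bzero B \in T ->
  (forall t y, t \in T -> y \in Y -> badd t y \in T) -> Cset \subset T.
Proof.
move=> h0 hD; apply: bigcap_inf; rewrite h0 /=.
apply/forallP=> t; apply/implyP=> tT; apply/forallP=> y; apply/implyP=> yY; exact: hD.
Qed.

Lemma C0 : bzero B \in Cset.
Proof. by apply/bigcapP=> T /andP[]. Qed.

Lemma CD t y : t \in Cset -> y \in Y -> badd t y \in Cset.
Proof.
move=> /bigcapP tC yY; apply/bigcapP=> T /andP[h0 /forallP hD].
have := forallP (implyP (hD t) (tC T (introT andP (conj h0 (introT forallP hD))))) y.
by rewrite yY.
Qed.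

Lemma lam0l w : lam (bzero B) w = w.
Proof. by rewrite -bone0 lam1. Qed.

Lemma C_inv : Cset \subset [set c | [forall w in Y, lam c w \in Y]].
Proof.
apply: C_ind.
  by rewrite inE; apply/forallP=> w; apply/implyP=> wY; rewrite lam0l.
move=> t y; rewrite !inE => /forallP Pt yY; apply/forallP=> w; apply/implyP=> wY.
have [w' w'Y e] : exists2 w', w' \in Y & lam t w' = y.
  apply: (fill_lemma (@lam_inj _ t)) => // u uY; exact: (implyP (Pt u) uY).
rewrite -e -circE lamM; apply: (implyP (Pt _)); exact: Y_lam.
Qed.

Lemma C_lamY c w : c \in Cset -> w \in Y -> lam c w \in Y.
Proof. by move=> /(subsetP C_inv); rewrite inE => /forallP h wY; apply: (implyP (h w)). Qed.

Lemma C_add a b : a \in Cset -> b \in Cset -> badd a b \in Cset.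
Proof.
move=> aC bC.
have sub : Cset \subset [set b | badd a b \in Cset].
  apply: C_ind; first by rewrite inE badd0r.
  by move=> t y; rewrite !inE => h yY; rewrite baddA; apply: CD.
by have := subsetP sub b bC; rewrite inE.
Qed.

Lemma YC y : y \in Y -> y \in Cset.
Proof. by move=> yY; rewrite -(badd0 y); apply: CD => //; apply: C0. Qed.

Lemma C_lam a b : a \in Cset -> b \in Cset -> lam a b \in Cset.
Proof.
move=> aC bC.
have sub : Cset \subset [set b | lam a b \in Cset].
  apply: C_ind; first by rewrite inE lam0 C0.
  move=> t y; rewrite !inE => h yY; rewrite lamD; apply: C_add => //.
  by apply: YC; apply: C_lamY.
by have := subsetP sub b bC; rewrite inE.
Qed.

Lemma C_bi : bi_subgroup Cset.
Proof.
have Cc a b : a \in Cset -> b \in Cset -> bcirc a b \in Cset.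
  by move=> aC bC; rewrite circE; apply: C_add => //; apply: C_lam.
have C1 : bone B \in Cset by rewrite bone0 C0.
apply/and5P; split; first exact: C0.
- by apply/forallP=> a; apply/implyP=> aC; apply/forallP=> b; apply/implyP; apply: C_add.
- apply/forallP=> a; apply/implyP=> aC.
  have ginj : injective (fun t => badd t a).
    by move=> t1 t2 /= e; apply: (@badd_inj _ a); rewrite !(baddC a).
  have [t tC e] := fill_lemma ginj (fun t tC => C_add tC aC) C0.
  have -> : bopp a = t by rewrite -(badd0 (bopp a)) -e -baddA baddNr badd0r.
  done.
- by rewrite bone0 C0.
apply/andP; split.
  by apply/forallP=> a; apply/implyP=> aC; apply/forallP=> b; apply/implyP; apply: Cc.
apply/forallP=> a; apply/implyP=> aC.
have [t tC e] := fill_lemma (@bcirc_inj _ a) (fun t tC => Cc _ _ aC tC) (C1).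
by rewrite -(bcirc1r (binv a)) -e bcircA bcircV bcirc1.
Qed.
Lemma S_full : S = [set: X].
Proof.
have CT : Cset = [set: B].
  apply/eqP; rewrite eqEsubset subsetT /= -fgen; apply: bigcap_inf.
  by rewrite C_bi /=; apply: YC; apply: imset_f.
apply/eqP; rewrite eqEsubset subsetT /=; apply/subsetP=> y _.
have : f y \in f @: [set: X] by apply: imset_f.
rewrite forb => /imsetP[b _ e].
have : f y \in Y by rewrite e; apply: C_lamY; [rewrite CT | apply: imset_f].
by case/imsetP=> s sS /finj ->.
Qed.
End Dir21.

Lemma dir21 (X : finType) (op : X -> X -> X) (x : X) (B : brace) (f : X -> B) :
  injective f -> (forall y z, f (op y z) = bcs_op (f y) (f z)) ->
  f @: [set: X] = [set blambda b (f x) | b in [set: B]] ->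
  brace_gen (f x) = [set: B] -> cs_gen op x = [set: X].
Proof.
move=> finj fhom forb fgen; apply/eqP; rewrite eqEsubset subsetT /=.
apply/bigcapsP=> S /andP[subS xS].
by rewrite (S_full finj fhom forb fgen subS xS).
Qed.

Lemma perm_cnt (T : eqType) (s1 s2 : seq T) :
  (forall w, count_mem w s1 = count_mem w s2) -> perm_eq s1 s2.
Proof. by move=> h; apply/allP=> w _; apply/eqP/h. Qed.

Lemma count_rep (T : finType) (g : T -> nat) w :
  count_mem w (flatten [seq nseq (g y) y | y <- enum T]) = g w.
Proof.
rewrite count_flatten sumnE !big_map.
under eq_bigr do rewrite count_nseq /=.
rewrite (bigD1_seq w) ?mem_enum ?enum_uniq //=; last 2 first.
- by rewrite -enumT mem_enum.
- by rewrite -enumT enum_uniq.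
rewrite big1 ?addn0; first by case: eqP => // _; rewrite mul1n.
by move=> y /negbTE ->.
Qed.

Lemma iter_period (T : Type) (F : T -> T) a i j : i < j ->
  iter i F a = iter j F a -> forall m k, i <= k -> iter (k + (j - i) * m) F a = iter k F a.
Proof.
move=> lij e; elim=> [|m IH] k ik; first by rewrite muln0 addn0.
rewrite mulnS addnA (addnC k) -addnA iterD IH; last by rewrite (leq_trans ik) // leq_addr.
rewrite -iterD -(subnKC ik) addnA (addnC _ i) subnKC ?(ltnW lij) //.
by rewrite addnC iterD -e -iterD addnC.
Qed.

Lemma modeq_add (M c1 c2 : nat) : c1 %% M = c2 %% M -> c1 + (c2 %/ M) * M = c2 + (c1 %/ M) * M.
Proof.
move=> h; rewrite {1}(divn_eq c1 M) {2}(divn_eq c2 M) h. lia.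
Qed.

Section Mono.
Variables (X : finType) (op : X -> X -> X).
Hypothesis hcs : is_cycle_set op.

Lemma op_inj y : injective (op y).
Proof. by case: hcs => hb _; apply: bij_inj. Qed.

Definition sg y : {perm X} := perm (@op_inj y).

Lemma sgE y z : sg y z = op y z.
Proof. by rewrite permE. Qed.

Definition step (t : {perm X}) y := (t * sg (t y))%g.

Definition Sig l := foldl step 1%g l.

Lemma step_comm t y z : step (step t y) z = step (step t z) y.
Proof.
rewrite /step -!mulgA; congr (t * _)%g; apply/permP => w.
rewrite !permM !sgE; case: hcs => _ ->; done.
Qed.

Lemma foldl_front t l r y : foldl step t (l ++ y :: r) = foldl step t (y :: l ++ r).
Proof.
elim: l t => [|z l IH] t //=; by rewrite IH /= step_comm.
Qed.

Lemma foldl_perm l1 l2 t : perm_eq l1 l2 -> foldl step t l1 = foldl step t l2.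
Proof.
elim: l1 l2 t => [|y l1 IH] l2 t.
  by rewrite perm_sym => /perm_nilP ->.
move=> pe; have yl2 : y \in l2 by rewrite -(perm_mem pe) mem_head.
move: pe; case/splitPr: yl2 => l r pe.
rewrite foldl_front /=; apply: IH.
rewrite -(perm_cons y); apply: (perm_trans pe).
by rewrite -cat1s perm_catCA.
Qed.

Lemma foldl_mul t r l : foldl step (t * r)%g l = (t * foldl step r (map t l))%g.
Proof.
elim: l r => [|y l IH] r //=; rewrite -IH; congr foldl.
by rewrite /step permM mulgA.
Qed.

Lemma Sig_cat l1 l2 : Sig (l1 ++ l2) = (Sig l1 * Sig (map (Sig l1) l2))%g.
Proof. by rewrite /Sig foldl_cat -{1}(mulg1 (foldl step 1%g l1)) foldl_mul. Qed.

Lemma Sig_perm l1 l2 : perm_eq l1 l2 -> Sig l1 = Sig l2.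
Proof. exact: foldl_perm. Qed.

Lemma Sig_nseq y k : Sig (nseq k y) = iter k (step^~ y) 1%g.
Proof.
elim: k => [|k IH] //.
by rewrite -addn1 nseqD /Sig foldl_cat -/(Sig _) IH addn1 /=.
Qed.

Definition N0 := #|{perm X}|.
Definition P0 := N0`!.

Lemma N0_gt0 : 0 < N0.
Proof. by apply/card_gt0P; exists 1%g. Qed.

Lemma iter_per y k : N0 <= k ->
  iter (k + P0) (step^~ y) 1%g = iter k (step^~ y) 1%g.
Proof.
pose g (i : 'I_N0.+1) := iter i (step^~ y) 1%g.
have : ~~ injectiveb g.
  apply/negP => /injectiveP/leq_card; rewrite card_ord /N0 ltnn //.
case/injectivePn => i [j neq e].
wlog lij : i j neq e / i < j.
  move=> W; case: (ltngtP i j) => h; first exact: W h.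
    by apply: (W j i) => //; rewrite eq_sym.
  by move/eqP: neq; case; apply: val_inj.
move=> Nk.
have q0 : 0 < j - i <= N0 by rewrite subn_gt0 lij /= (leq_trans (leq_subr _ _)) // -ltnS.
rewrite /P0; have /dvdnP[m ->] := dvdn_fact q0.
rewrite mulnC iter_period //.
by rewrite (leq_trans _ Nk) // -ltnS.
Qed.

Lemma filter_pred1 (T : eqType) (s : seq T) y : filter (pred1 y) s = nseq (count_mem y s) y.
Proof.
elim: s => [|z s IH] //=; case: eqP => [->|] //=; by rewrite IH.
Qed.

Lemma Sig_period l y : N0 <= count_mem y l -> Sig (l ++ nseq P0 y) = Sig l.
Proof.
move=> h; set k := count_mem y l in h.
set l' := filter (predC (pred1 y)) l.
have pl : perm_eq l (nseq k y ++ l').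
  by rewrite perm_sym /l' -filter_pred1 perm_filterC.
have pl2 : perm_eq (l ++ nseq P0 y) (nseq (k + P0) y ++ l').
  apply: (@perm_trans _ ((nseq k y ++ l') ++ nseq P0 y)); first by rewrite perm_cat2r.
  by rewrite nseqD -!catA perm_cat2l perm_catC.
rewrite (Sig_perm pl2) (Sig_perm pl) !Sig_cat !Sig_nseq iter_per //.
Qed.

Lemma Sig_periodM l y m : N0 <= count_mem y l -> Sig (l ++ nseq (P0 * m) y) = Sig l.
Proof.
move=> h; elim: m => [|m IH]; first by rewrite muln0 cats0.
rewrite mulnS addnC nseqD catA Sig_period ?IH //.
by rewrite count_cat (leq_trans h) ?leq_addr.
Qed.

Lemma Sig_blocks l ys (g : X -> nat) : (forall y, N0 <= count_mem y l) ->
  Sig (l ++ flatten [seq nseq (P0 * g y) y | y <- ys]) = Sig l.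
Proof.
elim: ys l => [|z ys IH] l h /=; first by rewrite cats0.
rewrite catA IH ?Sig_periodM //.
by move=> w; rewrite count_cat (leq_trans (h w)) ?leq_addr.
Qed.

Definition MM := P0 * 2.

Lemma Sig_cong l1 l2 : (forall y, N0 <= count_mem y l1) -> (forall y, N0 <= count_mem y l2) ->
  (forall y, count_mem y l1 = count_mem y l2 %[mod MM]) -> Sig l1 = Sig l2.
Proof.
move=> h1 h2 h.
rewrite -(Sig_blocks (enum X) (fun y => 2 * (count_mem y l2 %/ MM)) h1).
rewrite -(Sig_blocks (enum X) (fun y => 2 * (count_mem y l1 %/ MM)) h2).
apply: Sig_perm; apply: perm_cnt => w; rewrite !count_cat !count_rep.
rewrite !mulnA -/MM !(mulnC MM); exact: modeq_add.
Qed.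

End Mono.

Lemma count_map_perm (T : finType) (s : {perm T}) w l :
  count_mem w (map s l) = count_mem ((s^-1)%g w) l.
Proof.
rewrite count_map; apply: eq_count => z /=.
by rewrite -{1}(permKV s w) (inj_eq perm_inj).
Qed.

Section FfunLemmas.
Local Open Scope ring_scope.
Lemma ffunDE (T : finType) (R : zmodType) (f g : {ffun T -> R}) x : (f + g) x = f x + g x.
Proof. by rewrite ffunE. Qed.
Lemma ffunNE (T : finType) (R : zmodType) (f : {ffun T -> R}) x : (- f) x = - f x.
Proof. by rewrite ffunE. Qed.
Lemma ffun0E (T : finType) (R : zmodType) x : (0 : {ffun T -> R}) x = 0.
Proof. by rewrite ffunE. Qed.
End FfunLemmas.

Section BraceA.
Import GRing.Theory.
Variables (X : finType) (op : X -> X -> X).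
Hypothesis hcs : is_cycle_set op.

Local Notation Sig := (Sig hcs).
Local Notation N0 := (N0 X).
Local Notation P0 := (P0 X).
Local Notation MM := (MM X).

Lemma MM_gt1 : (1 < MM)%N.
Proof. rewrite /MM /P0; have := fact_gt0 N0; lia. Qed.

Definition Zt := 'Z_MM.
Definition A := {ffun X -> Zt}.
Definition Koff := (MM * N0)%N.

Definition rep (a : A) : seq X := flatten [seq nseq (a y + Koff)%N y | y <- enum X].

Lemma count_repA (a : A) w : count_mem w (rep a) = (a w + Koff)%N.
Proof. exact: (count_rep (fun y => (a y + Koff)%N)). Qed.

Lemma N0_Koff : (N0 <= Koff)%N.
Proof. by rewrite /Koff leq_pmull // ltnW // MM_gt1. Qed.

Definition sA (a : A) := Sig (rep a).
Local Open Scope ring_scope.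

Lemma valZ (i : Zt) : (i < MM)%N.
Proof. by apply: leq_trans (ltn_ord i) _; rewrite (Zp_cast MM_gt1). Qed.

Lemma valZD (i j : Zt) : nat_of_ord (i + j)%R = ((i + j) %% MM)%N.
Proof. by rewrite /=; congr (_ %% _); exact: Zp_cast MM_gt1. Qed.

Lemma sA_eq l (a : A) : (forall w, N0 <= count_mem w l)%N ->
  (forall w, count_mem w l = a w + Koff %[mod MM])%N -> Sig l = sA a.
Proof.
move=> h1 h2; apply: Sig_cong => // w; first by rewrite count_repA (leq_trans N0_Koff) ?leq_addl.
by rewrite count_repA.
Qed.

Lemma sA0 : sA 0 = 1%g.
Proof.
set t := sA 0.
have e1 : Sig (rep 0 ++ rep 0) = t.
  apply: sA_eq => w; rewrite count_cat count_repA ffunE /=.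
    by rewrite (leq_trans N0_Koff) ?leq_addr.
  by rewrite add0n /Koff -mulnDr !(modnMr, modnMl).
have e2 : Sig (rep 0 ++ rep 0) = (t * t)%g.
  rewrite Sig_cat; congr (_ * _)%g; apply: Sig_perm; apply: perm_cnt => w.
  by rewrite count_map_perm !count_repA !ffunE.
have : (t * t = t * 1)%g by rewrite -e2 e1 mulg1.
by move/mulgI.
Qed.

Definition lamA (a b : A) : A := [ffun w => b (sA a w)].
Definition circA (a b : A) : A := a + lamA a b.

Lemma sA_circ a b : sA (circA a b) = (sA a * sA b)%g.
Proof.
set s := sA a.
have e : Sig (rep a ++ map (s^-1)%g (rep b)) = (s * sA b)%g.
  rewrite Sig_cat -/(sA a) -/s -map_comp; congr (_ * _)%g.
  by rewrite (@eq_map _ _ _ id) ?map_id // => z /=; rewrite permKV.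
rewrite -e; symmetry.
apply: sA_eq.
  move=> w; rewrite count_cat (leq_trans N0_Koff) //.
  rewrite count_repA; lia.
move=> w; rewrite count_cat count_map_perm invgK !count_repA.
rewrite /circA ffunDE /lamA ffunE valZD -/s modnDml.
have -> : (a w + Koff + (b (s w) + Koff) = Koff + (a w + b (s w) + Koff))%N by lia.
by rewrite {1}/Koff mulnC modnMDl.
Qed.
Lemma lamAD a b c : lamA a (b + c) = lamA a b + lamA a c.
Proof. by apply/ffunP=> w; rewrite /lamA !(ffunE, ffunDE). Qed.

Lemma lamAM a b c : lamA (circA a b) c = lamA a (lamA b c).
Proof. by apply/ffunP=> w; rewrite !ffunE sA_circ permM. Qed.

Lemma lamA0 b : lamA 0 b = b.
Proof. by apply/ffunP=> w; rewrite !ffunE sA0 perm1. Qed.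

Definition invA (a : A) : A := - [ffun w => a ((sA a)^-1%g w)].

Lemma circAVr a : circA a (invA a) = 0.
Proof.
apply/ffunP=> w; rewrite /circA /lamA /invA !(ffunE, ffunDE, ffunNE) permK.
by rewrite addrN.
Qed.

Lemma sA_inv a : sA (invA a) = (sA a)^-1%g.
Proof.
have := sA_circ a (invA a); rewrite circAVr sA0 => e.
by rewrite -[LHS]mul1g -(mulVg (sA a)) -mulgA -e mulg1.
Qed.

Lemma circAV a : circA (invA a) a = 0.
Proof.
apply/ffunP=> w; rewrite /circA /lamA sA_inv /invA !(ffunE, ffunDE, ffunNE).
by rewrite addNr.
Qed.

Lemma circA1 a : circA 0 a = a.
Proof. by rewrite /circA lamA0 add0r. Qed.

Lemma circAA a b c : circA a (circA b c) = circA (circA a b) c.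
Proof. by rewrite /circA lamAD lamAM addrA. Qed.

Lemma circAD a b c : circA a (b + c) = circA a b - a + circA a c.
Proof. by rewrite /circA lamAD (addrC a (lamA a b)) addrK addrCA. Qed.

Definition BA : brace :=
  @Brace A (fun a b => a + b) (fun a => - a) 0 circA invA 0
    (@addrA _) (@addrC _) (@add0r _) (@addNr _) circAA circA1 circAV circAD.


Definition eA (y : X) : A := [ffun w => (w == y)%:R].

Lemma lamA_e a z : lamA a (eA z) = eA ((sA a)^-1%g z).
Proof.
apply/ffunP=> w; rewrite !ffunE.
by rewrite -{1}(permKV (sA a) z) (inj_eq perm_inj).
Qed.

Lemma sA_e y : sA (eA y) = sg hcs y.
Proof.
have e : Sig (rep 0 ++ [:: y]) = sg hcs y.
  have h0 := sA0; rewrite /sA in h0.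
  rewrite Sig_cat h0 mul1g /= perm1.
  exact: etrans (mul1g _) (congr1 (sg hcs) (perm1 y)).
rewrite -e; symmetry; apply: sA_eq.
  move=> w; rewrite count_cat count_repA; have := N0_Koff; lia.
move=> w; rewrite count_cat count_repA !ffunE val_Zp_nat ?MM_gt1 //= addn0 modnDml.
by rewrite eq_sym addnC /= add0n.
Qed.

Lemma eA_inj : injective eA.
Proof.
move=> y z e; have := congr1 (fun f : A => f y) e; rewrite !ffunE eqxx.
case: eqP => // _ /eqP; by rewrite oner_eq0.
Qed.

Lemma blamBA (a b : BA) : blambda a b = lamA a b.
Proof. by rewrite /blambda /= /circA addKr. Qed.

Lemma eA_hom y z : eA (op y z) = bcs_op (B:=BA) (eA y) (eA z).
Proof.
by rewrite /bcs_op blamBA /= lamA_e sA_inv invgK sA_e sgE.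
Qed.

Lemma lamBA_e (a : BA) z : blambda a (eA z) = eA ((sA a)^-1%g z).
Proof. by rewrite blamBA lamA_e. Qed.

End BraceA.

Lemma bsP (B : brace) (S : {set B}) :
  reflect ([/\ bzero B \in S, (forall a b, a \in S -> b \in S -> badd a b \in S) &
          (forall a, a \in S -> bopp a \in S)] /\ [/\ bone B \in S,
          (forall a b, a \in S -> b \in S -> bcirc a b \in S) &
          (forall a, a \in S -> binv a \in S)]) (bi_subgroup S).
Proof.
apply: (iffP idP).
  case/and5P=> h0 /forallP hD /forallP hN h1 /andP[/forallP hM /forallP hV]; split; split => //.
  - by move=> a b aS bS; have := forallP (implyP (hD a) aS) b; rewrite bS.
  - by move=> a aS; apply: (implyP (hN a)).
  - by move=> a b aS bS; have := forallP (implyP (hM a) aS) b; rewrite bS.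
  - by move=> a aS; apply: (implyP (hV a)).
case=> [[h0 hD hN] [h1 hM hV]]; apply/and5P; split => //; last (apply/andP; split).
- by apply/forallP=> a; apply/implyP=> aS; apply/forallP=> b; apply/implyP; apply: hD.
- by apply/forallP=> a; apply/implyP; apply: hN.
- by apply/forallP=> a; apply/implyP=> aS; apply/forallP=> b; apply/implyP; apply: hM.
- by apply/forallP=> a; apply/implyP; apply: hV.
Qed.

Lemma brace_gen_bi (B : brace) (x : B) : bi_subgroup (brace_gen x).
Proof.
apply/bsP; split; split.
- by apply/bigcapP=> T /andP[/bsP[[]]].
- move=> a b /bigcapP aS /bigcapP bS; apply/bigcapP=> T hT.
  by case/andP: (hT) => /bsP[[_ hD _] _] _; apply: hD; [apply: aS | apply: bS].
- move=> a /bigcapP aS; apply/bigcapP=> T hT.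
  by case/andP: (hT) => /bsP[[_ _ hN] _] _; apply: hN; apply: aS.
- by apply/bigcapP=> T /andP[/bsP[_ []]].
- move=> a b /bigcapP aS /bigcapP bS; apply/bigcapP=> T hT.
  by case/andP: (hT) => /bsP[_ [_ hM _]] _; apply: hM; [apply: aS | apply: bS].
- move=> a /bigcapP aS; apply/bigcapP=> T hT.
  by case/andP: (hT) => /bsP[_ [_ _ hV]] _; apply: hV; apply: aS.
Qed.

Lemma brace_gen_mem (B : brace) (x : B) : x \in brace_gen x.
Proof. by apply/bigcapP=> T /andP[]. Qed.

Section SubBrace.
Variables (B : brace) (S : {set B}).
Hypothesis hS : bi_subgroup S.

Let h0 : bzero B \in S. Proof. by case/bsP: hS => [[]]. Qed.
Let hD a b : a \in S -> b \in S -> badd a b \in S. Proof. by case/bsP: hS => [[_ h _] _]; apply: h. Qed.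
Let hN a : a \in S -> bopp a \in S. Proof. by case/bsP: hS => [[_ _ h] _]; apply: h. Qed.
Let h1 : bone B \in S. Proof. by case/bsP: hS => _ []. Qed.
Let hM a b : a \in S -> b \in S -> bcirc a b \in S. Proof. by case/bsP: hS => _ [_ h _]; apply: h. Qed.
Let hV a : a \in S -> binv a \in S. Proof. by case/bsP: hS => _ [_ _ h]; apply: h. Qed.

Definition sT : finType := {b : B | b \in S}.
Definition sadd (a b : sT) : sT := exist _ (badd (val a) (val b)) (hD (valP a) (valP b)).
Definition sopp (a : sT) : sT := exist _ (bopp (val a)) (hN (valP a)).
Definition szero : sT := exist _ (bzero B) h0.
Definition scirc (a b : sT) : sT := exist _ (bcirc (val a) (val b)) (hM (valP a) (valP b)).
Definition sinv (a : sT) : sT := exist _ (binv (val a)) (hV (valP a)).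
Definition sone : sT := exist _ (bone B) h1.

Definition subB : brace.
refine (@Brace sT sadd sopp szero scirc sinv sone _ _ _ _ _ _ _ _).
- by move=> a b c; apply: val_inj; rewrite /= baddA.
- by move=> a b; apply: val_inj; rewrite /= baddC.
- by move=> a; apply: val_inj; rewrite /= badd0.
- by move=> a; apply: val_inj; rewrite /= baddN.
- by move=> a b c; apply: val_inj; rewrite /= bcircA.
- by move=> a; apply: val_inj; rewrite /= bcirc1.
- by move=> a; apply: val_inj; rewrite /= bcircV.
- by move=> a b c; apply: val_inj; rewrite /= bdistr.
Defined.

Lemma sub_lam (a b : subB) : val (blambda a b) = blambda (val a) (val b).
Proof. by []. Qed.

Lemma sub_gen (x0 : B) (u : subB) : S = brace_gen x0 -> val u = x0 ->
  brace_gen u = [set: subB].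
Proof.
move=> SE ux; apply/eqP; rewrite eqEsubset subsetT /=.
apply/bigcapsP=> T /andP[/bsP[[t0 tD tN] [t1 tM tV]] uT].
pose T' := [set val t | t in T].
have T'bi : bi_subgroup T'.
  apply/bsP; split; split.
  - by apply/imsetP; exists szero.
  - move=> _ _ /imsetP[a aT ->] /imsetP[b bT ->]; apply/imsetP.
    by exists (sadd a b) => //; apply: tD.
  - move=> _ /imsetP[a aT ->]; apply/imsetP; by exists (sopp a) => //; apply: tN.
  - by apply/imsetP; exists sone.
  - move=> _ _ /imsetP[a aT ->] /imsetP[b bT ->]; apply/imsetP.
    by exists (scirc a b) => //; apply: tM.
  - move=> _ /imsetP[a aT ->]; apply/imsetP; by exists (sinv a) => //; apply: tV.
have sub : brace_gen x0 \subset T'.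
  by apply: bigcap_inf; rewrite T'bi -ux; apply: imset_f.
apply/subsetP=> v _.
have : val v \in T' by apply: (subsetP sub); rewrite -SE (valP v).
by case/imsetP=> t tT /val_inj ->.
Qed.

End SubBrace.

Section Dir12.
Variables (X : finType) (op : X -> X -> X) (x : X) (hcs : is_cycle_set op).
Hypothesis hgen : cs_gen op x = [set: X].

Local Notation BB := (BA hcs).
Let e (y : X) : BB := eA y.
Local Notation G := (brace_gen (e x)).
Let hG : bi_subgroup G := brace_gen_bi (e x).

Let gD a b : a \in G -> b \in G -> badd a b \in G. Proof. by case/bsP: hG => [[_ h _] _]; apply: h. Qed.
Let gN a : a \in G -> bopp a \in G. Proof. by case/bsP: hG => [[_ _ h] _]; apply: h. Qed.
Let g1 : bone BB \in G. Proof. by case/bsP: hG => _ []. Qed.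
Let gM a b : a \in G -> b \in G -> bcirc a b \in G. Proof. by case/bsP: hG => _ [_ h _]; apply: h. Qed.
Let gV a : a \in G -> binv a \in G. Proof. by case/bsP: hG => _ [_ _ h]; apply: h. Qed.

Let G_lam b c : b \in G -> c \in G -> blambda b c \in G.
Proof. by move=> bG cG; apply: gD; [apply: gN | apply: gM]. Qed.

Definition Sset := [set y | [exists b in G, blambda b (e x) == e y]].

Let SsetP y : reflect (exists2 b, b \in G & blambda b (e x) = e y) (y \in Sset).
Proof.
rewrite inE; apply: (iffP existsP) => [[b /andP[bG /eqP h]] | [b bG h]]; first by exists b.
by exists b; rewrite bG h eqxx.
Qed.

Let eG y : y \in Sset -> e y \in G.
Proof. by case/SsetP=> b bG <-; apply: G_lam => //; apply: brace_gen_mem. Qed.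

Lemma Sset_sub : sub_cycle_set op Sset.
Proof.
apply/and4P; split.
- apply/set0Pn; exists x; apply/SsetP; exists (bone BB) => //; exact: lam1.
- apply/forallP=> y; apply/implyP=> yS; apply/forallP=> z; apply/implyP=> /SsetP[b bG hb].
  apply/SsetP; exists (bcirc (binv (e y)) b); first by apply: gM => //; apply: gV; apply: eG.
  by rewrite lamM hb /e eA_hom.
- apply/forallP=> y; apply/implyP=> _; apply/forallP=> z; apply/implyP=> _.
  apply/forallP=> w; apply/implyP=> _; apply/implyP=> /eqP /(op_inj hcs) ->; exact: eqxx.
- apply/forallP=> y; apply/implyP=> yS; apply/forallP=> w; apply/implyP=> /SsetP[b bG hb].
  have hz : op y ((sg hcs y)^-1%g w) = w by rewrite -sgE permKV.
  apply/existsP; exists ((sg hcs y)^-1%g w); rewrite hz eqxx andbT.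
  apply/SsetP; exists (bcirc (e y) b); first by apply: gM => //; apply: eG.
  have := eA_hom hcs y ((sg hcs y)^-1%g w); rewrite hz => h.
  by rewrite lamM hb /e h /bcs_op lamK.
Qed.

Lemma in_Sset y : y \in Sset.
Proof.
have : cs_gen op x \subset Sset.
  apply: bigcap_inf; rewrite Sset_sub /=; apply/SsetP; exists (bone BB) => //; exact: lam1.
by rewrite hgen => /subsetP; apply.
Qed.

Lemma dir12 : exists (B : brace) (f : X -> B),
     [/\ injective f,
         (forall y z, f (op y z) = bcs_op (f y) (f z)),
         f @: [set: X] = [set blambda b (f x) | b in [set: B]] &
         brace_gen (f x) = [set: B]].
Proof.
pose f (y : X) : subB hG := exist _ (e y) (eG (in_Sset y)).
exists (subB hG), f; split.
- by move=> y z /(congr1 val) /= /eA_inj.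
- by move=> y z; apply: val_inj; rewrite /= /e eA_hom.
- apply/setP=> u; apply/imsetP/imsetP.
    case=> y _ ->; case/SsetP: (in_Sset y) => b bG hb.
    exists (exist _ b bG : subB hG) => //; apply: val_inj; exact: esym hb.
  case=> b _ ->; exists ((sA hcs (val b))^-1%g x) => //.
  apply: val_inj; rewrite sub_lam; exact: lamBA_e.
- by apply: (@sub_gen _ _ hG (e x) (f x)).
Qed.

End Dir12.

Theorem mainTheorem6 (X : finType) (op : X -> X -> X) (x : X) :
  is_cycle_set op ->
  (cs_gen op x = [set: X] <->
   exists (B : brace) (f : X -> B),
     [/\ injective f,
         (forall y z, f (op y z) = bcs_op (f y) (f z)),
         f @: [set: X] = [set blambda b (f x) | b in [set: B]] &
         brace_gen (f x) = [set: B]]).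
Proof.
move=> hcs; split; first exact: dir12.
by case=> B [f [finj fhom forb fgen]]; apply: (dir21 finj fhom forb fgen).
Qed.
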